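(* In the setting described in the context, let $n\ge0$ and let $\tilde\mu'_{m,n}=\max\{x\in[\min P,d]: f^{m+2n}(x)=d\}$ (this set is nonempty). Then every periodic point of $f$ in $[\tilde\mu'_{m,n},d]$ whose least period is odd has least period $\ge m+2n+2$.
   Context: Let $I$ be a compact interval and $f:I\to I$ continuous; $f^1=f$, $f^n=f\circ f^{n-1}$. A point $x_0$ is a periodic point of least period $k$ (a period-$k$ point) if $f^k(x_0)=x_0$ and $f^i(x_0)\ne x_0$ for $0<i<k$. Let $m\ge3$ be odd and let $P$ be a periodic orbit of $f$ of least period $m$. Put $e=f^{m-1}(\min P)$. Let $v\in[\min P,e)$ be a point with $f(v)=e$, and let $z\in(v,e)$ be a fixed point of $f$ (such points exist). Define $z_0=\min\{x\in[v,z]: f^2(x)=x\}$ and $d=\max\{x\in[\min P,v]: f^2(x)=z_0\}$ (both sets are nonempty). *)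

(* Defs.v *)
From Stdlib Require Import Reals Lra Lia Arith.
Open Scope R_scope.

Fixpoint fpow (f : R -> R) (n : nat) (x : R) : R :=
  match n with
  | O => x
  | S k => f (fpow f k x)
  end.

Definition continuous_on_interval (f : R -> R) (a b : R) : Prop :=
  forall x, a <= x <= b ->
    forall eps, eps > 0 -> exists delta, delta > 0 /\
      forall y, a <= y <= b -> Rabs (y - x) < delta -> Rabs (f y - f x) < eps.

Definition maps_into (f : R -> R) (a b : R) : Prop :=
  forall x, a <= x <= b -> a <= f x <= b.

Definition least_period (f : R -> R) (k : nat) (x0 : R) : Prop :=
  (0 < k)%nat /\ fpow f k x0 = x0 /\
  forall i, (0 < i < k)%nat -> fpow f i x0 <> x0.

(* Main.v *)
Require Import Defs.
From Stdlib Require Import Reals Lra Lia Arith.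
Open Scope R_scope.

Lemma fpow_add (f : R -> R) (a c : nat) (x : R) :
  fpow f (a + c) x = fpow f a (fpow f c x).
Proof. induction a as [|a IH]; simpl; [reflexivity| rewrite IH; reflexivity]. Qed.

Lemma fpow_in (f : R -> R) (a b : R) (k : nat) (x : R) :
  maps_into f a b -> a <= x <= b -> a <= fpow f k x <= b.
Proof. intros Hm Hx. induction k as [|k IH]; simpl; auto. Qed.

Lemma fpow_cont (g : R -> R) (k : nat) : continuity g -> continuity (fpow g k).
Proof.
  intros Hg. induction k as [|k IH].
  - exact (derivable_continuous _ derivable_id).
  - exact (continuity_comp _ _ IH Hg).
Qed.

Lemma ivt_le (g : R -> R) (x y t : R) :
  continuity g -> x <= y -> g x <= t <= g y -> exists c, x <= c <= y /\ g c = t.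
Proof.
  intros Hg Hxy Ht.
  assert (Hc : continuity (fun z => g z - t)).
  { apply continuity_minus; [exact Hg| apply continuity_const; intros ? ?; reflexivity]. }
  destruct (IVT_cor (fun z => g z - t) x y Hc Hxy) as [c [Hc1 Hc2]].
  { simpl. nra. }
  exists c. split; [exact Hc1| simpl in Hc2; lra].
Qed.

Definition clampR (a b y : R) := Rmax a (Rmin b y).

Lemma clamp_in a b y : a <= b -> a <= clampR a b y <= b.
Proof. intros H. unfold clampR, Rmax, Rmin. repeat destruct Rle_dec; lra. Qed.

Lemma clamp_id a b y : a <= y <= b -> clampR a b y = y.
Proof. intros H. unfold clampR, Rmax, Rmin. repeat destruct Rle_dec; lra. Qed.

Lemma clamp_lip a b y y0 : a <= b -> Rabs (clampR a b y - clampR a b y0) <= Rabs (y - y0).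
Proof.
  intros H. unfold clampR, Rmax, Rmin.
  repeat destruct Rle_dec; unfold Rabs; repeat destruct Rcase_abs; lra.
Qed.

Lemma ext_cont (f : R -> R) (a b : R) :
  a <= b -> continuous_on_interval f a b -> continuity (fun y => f (clampR a b y)).
Proof.
  intros Hab Hc y0. unfold continuity_pt, continue_in, limit1_in, limit_in.
  intros eps He.
  destruct (Hc (clampR a b y0) (clamp_in a b y0 Hab) eps He) as [del [Hd H]].
  exists del. split; [exact Hd|].
  intros x [_ Hx]. simpl in *. unfold Rdist in *.
  apply H; [apply clamp_in; exact Hab|].
  eapply Rle_lt_trans; [apply clamp_lip; exact Hab| exact Hx].
Qed.

Lemma fpow_ext (f : R -> R) (a b : R) (k : nat) (x : R) :
  maps_into f a b -> a <= x <= b ->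
  fpow (fun y => f (clampR a b y)) k x = fpow f k x.
Proof.
  intros Hm Hx. induction k as [|k IH]; simpl; [reflexivity|].
  rewrite IH, clamp_id; [reflexivity|]. apply fpow_in; auto.
Qed.

Lemma ivt_f (f : R -> R) (a b : R) :
  a <= b -> maps_into f a b -> continuous_on_interval f a b ->
  forall j x y t, a <= x -> y <= b -> x <= y ->
  fpow f j x <= t <= fpow f j y -> exists c, x <= c <= y /\ fpow f j c = t.
Proof.
  intros Hab Hm Hc j x y t Hax Hyb Hxy Ht.
  rewrite <- (fpow_ext f a b j x Hm) in Ht by lra.
  rewrite <- (fpow_ext f a b j y Hm) in Ht by lra.
  destruct (ivt_le _ x y t (fpow_cont _ j (ext_cont f a b Hab Hc)) Hxy Ht) as [c [Hc1 Hc2]].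
  exists c. split; [exact Hc1|]. rewrite <- Hc2. symmetry. apply fpow_ext; auto; lra.
Qed.

Theorem lemma7 (a b : R) (f : R -> R) (m n : nat) (p e v z z0 d mu : R) :
  a <= b ->
  maps_into f a b ->
  continuous_on_interval f a b ->
  (3 <= m)%nat -> Nat.Odd m ->
  a <= p <= b ->
  least_period f m p ->
  (forall i : nat, p <= fpow f i p) ->
  e = fpow f (m - 1) p ->
  p <= v < e -> f v = e ->
  v < z < e -> f z = z ->
  (v <= z0 <= z /\ fpow f 2 z0 = z0 /\
   forall x, v <= x <= z -> fpow f 2 x = x -> z0 <= x) ->
  (p <= d <= v /\ fpow f 2 d = z0 /\
   forall x, p <= x <= v -> fpow f 2 x = z0 -> x <= d) ->
  (p <= mu <= d /\ fpow f (m + 2 * n) mu = d /\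
   forall x, p <= x <= d -> fpow f (m + 2 * n) x = d -> x <= mu) ->
  forall (y : R) (k : nat),
    mu <= y <= d -> least_period f k y -> Nat.Odd k ->
    (m + 2 * n + 2 <= k)%nat.
Proof.
  intros Hab Hmap Hc Hm3 Hmodd Hp Hlp Hpmin He Hv Hfv Hz Hfz
    [Hz0a [Hz0b Hz0c]] [Hda [Hdb Hdc]] [Hmua [Hmub Hmuc]] y k Hy Hk Hkodd.
  destruct Hlp as [Hm0 [Hpm Hpmin']].
  pose proof (ivt_f f a b Hab Hmap Hc) as IVTf.
  assert (Hein : a <= e <= b) by (rewrite He; apply fpow_in; auto).
  assert (Hf2v : fpow f 2 v = p).
  { simpl. rewrite Hfv, He.
    change (fpow f (S (m - 1)) p = p). replace (S (m - 1)) with m by lia. exact Hpm. }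
  assert (Hvz0 : v < z0).
  { destruct (Rle_lt_or_eq_dec v z0 (proj1 Hz0a)) as [H|H]; [exact H|].
    exfalso. rewrite <- H, Hf2v in Hz0b. rewrite <- Hz0b in Hf2v.
    apply (Hpmin' 2%nat); [lia| exact Hf2v]. }
  assert (Hdz0 : d < z0) by lra.
  assert (Hw0 : z0 <= f z0).
  { destruct (Rle_or_lt z0 (f z0)) as [H|H]; [exact H|]. exfalso.
    set (F := fun y => f (clampR a b y)).
    assert (HF : continuity F) by (apply ext_cont; auto).
    assert (HFv : F v = f v) by (unfold F; rewrite clamp_id; [reflexivity| lra]).
    assert (HFz0 : F z0 = f z0) by (unfold F; rewrite clamp_id; [reflexivity| lra]).
    assert (Hg : continuity (fun x => x - F x))
      by (apply continuity_minus; [exact (derivable_continuous _ derivable_id)| exact HF]).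
    destruct (ivt_le (fun x => x - F x) v z0 0 Hg (proj1 Hz0a)) as [c [Hc1 Hc2]].
    { rewrite HFv, HFz0. lra. }
    assert (HFc : F c = f c) by (unfold F; rewrite clamp_id; [reflexivity| lra]).
    assert (Hfc : f c = c) by lra.
    assert (Hc3 : z0 <= c) by (apply Hz0c; [lra| simpl; rewrite Hfc, Hfc; reflexivity]).
    assert (c = z0) by lra. subst c. lra. }
  assert (Hd2 : forall i, fpow f (2 * S i) d = z0).
  { induction i as [|i IH]; [exact Hdb|].
    replace (2 * S (S i))%nat with (2 + 2 * S i)%nat by lia.
    rewrite fpow_add, IH. exact Hz0b. }
  assert (Hdodd : forall i, fpow f (2 * S i + 1) d = f z0).
  { intros i. replace (2 * S i + 1)%nat with (S (2 * S i)) by lia. simpl.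
    change (f (fpow f (2 * S i) d) = f z0). rewrite Hd2. reflexivity. }
  assert (Hcov1 : forall t, p <= t <= z0 -> exists q, v <= q <= z0 /\ fpow f 2 q = t).
  { intros t Ht. apply IVTf; try lra; rewrite Hf2v, Hz0b; lra. }
  assert (Hcov : forall s t, p <= t <= z0 ->
            exists q, v <= q <= z0 /\ fpow f (2 * S s) q = t).
  { induction s as [|s IH]; intros t Ht.
    - apply Hcov1; exact Ht.
    - destruct (IH t Ht) as [q' [Hq'1 Hq'2]].
      destruct (Hcov1 q') as [q [Hq1 Hq2]]; [lra|].
      exists q. split; [exact Hq1|].
      replace (2 * S (S s))%nat with (2 * S s + 2)%nat by lia.
      rewrite fpow_add, Hq2. exact Hq'2. }
  destruct (le_lt_dec (m + 2 * n + 2) k) as [Hok|Hlt]; [exact Hok|]. exfalso.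
  destruct Hk as [Hk0 [Hky Hkmin]].
  destruct Hkodd as [r Hr]. destruct Hmodd as [m' Hm'].
  assert (Hj : exists j r', j = (2 * r' + 3)%nat /\ (j <= m + 2 * n)%nat /\ fpow f j y = y).
  { destruct r as [|r].
    - exists 3%nat, 0%nat. split; [reflexivity|]. split; [lia|].
      assert (Hfy : f y = y) by (subst k; exact Hky).
      simpl. rewrite Hfy, Hfy, Hfy. reflexivity.
    - exists k, r. split; [lia|]. split; [lia| exact Hky]. }
  destruct Hj as [j [r' [Hjr [HjN Hjy]]]].
  destruct (Req_dec y mu) as [Heq|Hneq].
  - subst y.
    assert (Hkd : fpow f k d = d).
    { rewrite <- Hmub at 1. rewrite <- fpow_add.
      rewrite Nat.add_comm, fpow_add, Hky. exact Hmub. }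
    assert (Hkkd : fpow f (k + k) d = d) by (rewrite fpow_add, Hkd; exact Hkd).
    replace (k + k)%nat with (2 * S (k - 1))%nat in Hkkd by lia.
    rewrite Hd2 in Hkkd. lra.
  - assert (Hymu : mu < y) by lra.
    assert (Hs : exists s, (m + 2 * n = j + 2 * s)%nat) by (exists (m' + n - r' - 1)%nat; lia).
    destruct Hs as [s Hs].
    assert (Hjd : fpow f j d = f z0).
    { rewrite Hjr. replace (2 * r' + 3)%nat with (2 * S r' + 1)%nat by lia. apply Hdodd. }
    assert (Hu : exists u, y <= u <= d /\ fpow f (m + 2 * n) u = d).
    { destruct s as [|s].
      - destruct (IVTf j y d d) as [u [Hu1 Hu2]]; try lra.
        exists u. split; [exact Hu1|]. rewrite Hs.
          replace (j + 2 * 0)%nat with j by lia. exact Hu2.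
      - destruct (Hcov s d) as [q [Hq1 Hq2]]; [lra|].
        destruct (IVTf j y d q) as [u [Hu1 Hu2]]; try lra.
        exists u. split; [exact Hu1|].
          rewrite Hs, Nat.add_comm, fpow_add, Hu2. exact Hq2. }
    destruct Hu as [u [Hu1 Hu2]].
    assert (u <= mu) by (apply Hmuc; [lra| exact Hu2]).
    lra.
Qed.
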